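(* Let $p$ be an odd prime and let $m,k$ be positive integers such that $m/\gcd(m,k)$ is odd. For $x,y\in\mathbb{F}_{p^m}$ put $x\circ_k y=x^{p^k}y+y^{p^k}x$. Let $\alpha$ be a non-square element of $\mathbb{F}_{p^m}$ and $\sigma$ a field automorphism of $\mathbb{F}_{p^m}$. For $(a,b),(c,d)\in\mathbb{F}_{p^m}^2$ define $$(a,b)*(c,d)=\big(a\circ_k c+\alpha\,\sigma(b\circ_k d),\ ad+bc\big).$$ Then $(\mathbb{F}_{p^m}^2,+,* )$ (with componentwise addition, i.e. the additive group of $\mathbb{F}_{p^{2m}}$) is a presemifield.
   Context: A (finite) presemifield is a finite set with an addition making it an abelian group and a multiplication $*$ satisfying both distributive laws $(a+b)*c=a*c+b*c$, $a*(b+c)=a*b+a*c$, and such that $x*y=0$ implies $x=0$ or $y=0$ (equivalently, for nonzero elements the left and right multiplication maps are bijective); a multiplicative identity is not required. *)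

(* Defs.v *)
From HB Require Import structures.
From mathcomp Require Import all_boot all_order all_algebra all_field.
Set Implicit Arguments. Unset Strict Implicit. Unset Printing Implicit Defensive.
Import GRing.Theory.
Local Open Scope ring_scope.

Definition is_presemifield (T : zmodType) (mul : T -> T -> T) : Prop :=
  [/\ forall a b c : T, mul (a + b) c = mul a c + mul b c,
      forall a b c : T, mul a (b + c) = mul a b + mul a c &
      forall x y : T, mul x y = 0 -> x = 0 \/ y = 0].

Definition circk (F : fieldType) (p k : nat) (x y : F) : F :=
  x ^+ (p ^ k) * y + y ^+ (p ^ k) * x.

Definition starmul (F : fieldType) (p k : nat) (alpha : F) (sigma : F -> F)
  (u v : F * F) : F * F :=
  (circk p k u.1 v.1 + alpha * sigma (circk p k u.2 v.2), u.1 * v.2 + u.2 * v.1).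

(* Main.v *)
Require Import Defs.
From HB Require Import structures.
From mathcomp Require Import all_boot all_order all_algebra all_field.
From mathcomp Require Import ring zify.
Import GRing.Theory.
Local Open Scope ring_scope.
Lemma expf_card1 (F : finFieldType) (z : F) : z != 0 -> z ^+ (#|F|.-1) = 1.
Proof.
move=> nz; have := expf_card z.
rewrite -(prednK (ltnW (finNzRing_gt1 F))) exprS => H.
by apply: (mulfI nz); rewrite mulr1.
Qed.

Lemma half_pred (n : nat) : odd n -> n.-1 = (n./2 * 2)%N.
Proof.
move=> ho; have E := odd_double_half n; rewrite ho in E.
by rewrite -{1}E add1n /= -muln2.
Qed.

Lemma sq_pow_half (F : finFieldType) (z : F) : odd #|F| -> z != 0 ->
  (z ^+ 2) ^+ (#|F|./2) = 1.
Proof.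
move=> ho nz; rewrite -exprM -(@expf_card1 _ z nz); congr (_ ^+ _).
by rewrite half_pred // mulnC.
Qed.

Lemma euler_sq (F : finFieldType) (y : F) : odd #|F| -> y != 0 ->
  y ^+ (#|F|./2) = 1 -> exists x, x ^+ 2 = y.
Proof.
move=> ho ny hy.
case: (pickP (fun x : F => x ^+ 2 == y)) => [x /eqP <-|nsq]; first by exists x.
exfalso.
set h := #|F|./2.
have n1 : #|F|.-1 = (h * 2)%N.
  exact: half_pred.
have hpos : (0 < h)%N.
  rewrite -(ltn_pmul2r (_ : 0 < 2)%N) // mul0n -n1.
  by move: (finNzRing_gt1 F); case: #|F| => // -[].
pose D := [set~ (0 : F)].
pose A := [set x ^+ 2 | x in D].
pose B := [set y * a | a in A].
pose R := [set z : F | z ^+ h == 1].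
have AR : A \subset R.
  apply/subsetP => _ /imsetP[x xD ->]; rewrite inE sq_pow_half //.
  by move: xD; rewrite !inE.
have BR : B \subset R.
  apply/subsetP => _ /imsetP[a aA ->]; rewrite inE exprMn hy mul1r.
  by have := subsetP AR a aA; rewrite inE.
have dAB : A :&: B = set0.
  apply/setP => z; rewrite !inE; apply/negbTE/negP => /andP[/imsetP[x xD ->]].
  move=> /imsetP[_ /imsetP[x' x'D ->]] E.
  move: xD x'D; rewrite !inE => nx nx'.
  have := nsq (x / x'); rewrite expr_div_n E mulrK ?eqxx //.
  by rewrite unitfE expf_neq0.
have cB : #|B| = #|A| by apply: card_imset; apply: mulfI.
have cR : (#|R| <= h)%N.
  rewrite cardE; apply: max_unity_roots => //; last exact: enum_uniq.
  by apply/allP => z; rewrite mem_enum inE unity_rootE.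
have cA : (h * 2 <= #|A| * 2)%N.
  rewrite -n1 -(cardsC1 (0 : F)) -/D -sum1_card.
  rewrite (partition_big (fun x => x ^+ 2) (mem A)); last first.
    by move=> x xD; apply/imsetP; exists x.
  rewrite -sum1_card big_distrl /= leq_sum // => a /imsetP[x0 x0D ->].
  rewrite mul1n sum1dep_card.
  apply: leq_trans (_ : #|[set x0; - x0]| <= 2)%N; last by rewrite cards2; case: (_ != _).
  apply: subset_leq_card; apply/subsetP => x; rewrite !inE => /andP[_].
  by rewrite eqf_sqr.
have : (#|A| + #|B| <= h)%N.
  rewrite -cardsUI dAB cards0 addn0; apply: leq_trans cR.
  by apply: subset_leq_card; rewrite subUset AR BR.
rewrite cB addnn -mul2n mulnC => H.
have := leq_trans cA H; move: hpos; lia.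
Qed.
Lemma powiter (F : fieldType) (t e : F) (B : nat) :
  t ^+ B = e * t -> e ^+ B = e -> forall j, t ^+ (B ^ j) = e ^+ j * t.
Proof.
move=> Ht He; elim=> [|j IH]; first by rewrite expn0 expr1 expr0 mul1r.
by rewrite expnSr exprM IH exprMn Ht -exprM mulnC exprM He exprSr mulrA.
Qed.

Lemma sign_odd_pow (F : fieldType) (j B : nat) : odd B ->
  ((-1) ^+ j : F) ^+ B = (-1) ^+ j.
Proof. by move=> oB; rewrite -exprM mulnC exprM -(signr_odd _ B) oB expr1. Qed.

Lemma twoF (F : fieldType) (p : nat) : prime p -> odd p -> p \in [pchar F] ->
  (2 : F) != 0.
Proof.
move=> pp op ch; rewrite -(dvdn_pcharf ch 2); apply/negP => /dvdn_leq.
move: (prime_gt1 pp) op; case: p {pp ch} => // -[|[|n]] //= _ _ /(_ isT); by rewrite !ltnS ltn0.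
Qed.

Lemma no_root_q (F : finFieldType) (p m k : nat) (t : F) :
  prime p -> odd p -> p \in [pchar F] -> #|F| = (p ^ m)%N ->
  (0 < m)%N -> (0 < k)%N -> odd (m %/ gcdn m k) ->
  t ^+ (p ^ k) = - t -> t = 0.
Proof.
move=> pp op ch cF m0 k0 odg Ht.
have two := @twoF F p pp op ch.
have tt : forall t' : F, t' = - t' -> t' = 0.
  move=> t' E; apply/eqP; have : t' + t' = 0 by rewrite {1}E addNr.
  by move/eqP; rewrite -mulr2n -mulr_natr mulf_eq0 (negbTE two) orbF.
have oq : forall j, odd (p ^ j) by move=> j; rewrite oddX op orbT.
have Hk := @powiter F t (-1) (p ^ k) ltac:(by rewrite Ht mulN1r)
  ltac:(by rewrite -signr_odd oq).
have Hm := @powiter F t 1 (p ^ m) ltac:(by rewrite -cF expf_card mul1r)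
  ltac:(by rewrite expr1n).
case: (egcdnP m k0) => km kn Ek _.
set g := gcdn k m in Ek.
set e : F := (-1) ^+ km.
have Hg : t ^+ (p ^ g) = e * t.
  have := Hk km; rewrite -expnM mulnC Ek expnD (mulnC kn) expnM exprM Hm expr1n mul1r.
  by move=> <-.
have Hg' := @powiter F t e (p ^ g) Hg (@sign_odd_pow F km _ (oq g)).
have gm : (g %| m)%N by rewrite /g dvdn_gcdr.
have gk : (g %| k)%N by rewrite /g dvdn_gcdl.
have E1 : t = e ^+ (m %/ g) * t.
  by rewrite -Hg' -expnM mulnC divnK // -cF expf_card.
have E2 : - t = e ^+ (k %/ g) * t.
  by rewrite -Hg' -expnM mulnC divnK // -Ht.
move: E1 E2; rewrite /e -!exprM -(signr_odd _ (km * (m %/ g))) oddM.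
rewrite /g gcdnC odg andbT -(signr_odd _ (km * _)) oddM.
case: (odd km) => /=; rewrite ?expr1 ?expr0 ?mul1r ?mulN1r.
  by move=> E _; apply: tt.
by move=> _ E; apply: tt; rewrite -E opprK.
Qed.

Theorem theorem1 (F : finFieldType) (p m k : nat) (alpha : F)
  (sigma : {rmorphism F -> F}) :
  prime p -> odd p -> p \in [pchar F] -> #|F| = (p ^ m)%N ->
  (0 < m)%N -> (0 < k)%N -> odd (m %/ gcdn m k) ->
  ~ (exists y : F, y ^+ 2 = alpha) ->
  bijective sigma ->
  is_presemifield (starmul p k alpha sigma).
Proof.
move=> pp op ch cF m0 k0 odg nsq bij.
set q := (p ^ k)%N.
have qnat : [pchar F].-nat q by rewrite /q pnatX (pnatE _ pp) ch.
have frD (x y : F) : (x + y) ^+ q = x ^+ q + y ^+ q := exprDn_pchar x y qnat.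
have frN (x : F) : (- x) ^+ q = - x ^+ q := exprNn_pchar x qnat.
have cD1 (a b c : F) : circk p k (a + b) c = circk p k a c + circk p k b c.
  by rewrite /circk -/q frD; ring.
have cD2 (a b c : F) : circk p k a (b + c) = circk p k a b + circk p k a c.
  by rewrite /circk -/q frD; ring.
have cN (a c : F) : circk p k (- a) c = - circk p k a c.
  by rewrite /circk -/q frN; ring.
have two := @twoF F p pp op ch.
have tt : forall t' : F, t' = - t' -> t' = 0.
  move=> t' E; apply/eqP; have : t' + t' = 0 by rewrite {1}E addNr.
  by move/eqP; rewrite -mulr2n -mulr_natr mulf_eq0 (negbTE two) orbF.
have nrq (t : F) : t ^+ q = - t -> t = 0 := @no_root_q F p m k t pp op ch cF m0 k0 odg.
have cmul (t c : F) : circk p k (t * c) c = c ^+ q * c * (t ^+ q + t).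
  by rewrite /circk -/q exprMn; ring.
have c0 (a c : F) : c != 0 -> circk p k a c = 0 -> a = 0.
  move=> nc; have -> : a = (a / c) * c by rewrite divfK.
  rewrite cmul => /eqP; rewrite !mulf_eq0 expf_eq0 (negbTE nc) andbF /=.
  by rewrite addr_eq0 => /eqP/nrq ->; rewrite mul0r.
have ck0 (a : F) : circk p k a 0 = 0.
  have := cD2 a 0 0; rewrite addr0 -{1}[circk p k a 0]addr0 => /addrI.
  by move<-.
have a0 : alpha != 0.
  by apply/eqP => a0; apply: nsq; exists 0; rewrite a0 expr0n.
split.
- move=> [a b] [c d] [e f]; rewrite /starmul /=; congr pair.
    by rewrite !cD1 rmorphD /=; ring.
  by rewrite /=; ring.
- move=> [a b] [c d] [e f]; rewrite /starmul /=; congr pair.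
    by rewrite !cD2 rmorphD /=; ring.
  by rewrite /=; ring.
move=> [a b] [c d]; rewrite /starmul /= => H.
have H1 : circk p k a c + alpha * sigma (circk p k b d) = 0 by case: H.
have H2 : a * d + b * c = 0 by case: H.
have oF : odd #|F| by rewrite cF oddX op orbT.
have [cz|cn] := eqVneq c 0.
  rewrite cz mulr0 addr0 in H2; rewrite cz ck0 add0r in H1.
  have [dz|dn] := eqVneq d 0; first by right; rewrite cz dz.
  have az : a = 0 by move/eqP: H2; rewrite mulf_eq0 (negbTE dn) orbF => /eqP.
  move/eqP: H1; rewrite mulf_eq0 (negbTE a0) /= fmorph_eq0 => /eqP/(c0 _ _ dn) bz.
  by left; rewrite az bz.
have [dz|dn] := eqVneq d 0.
  rewrite dz mulr0 add0r in H2; rewrite dz ck0 rmorph0 mulr0 addr0 in H1.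
  have bz : b = 0 by move/eqP: H2; rewrite mulf_eq0 (negbTE cn) orbF => /eqP.
  by left; rewrite (c0 _ _ cn H1) bz.
set u := b / d.
have bE : b = u * d by rewrite /u divfK.
have aE : a = - (u * c).
  apply/eqP; rewrite -addr_eq0; apply/eqP; apply: (mulIf dn).
  by rewrite mul0r -H2 bE; ring.
rewrite aE bE cN !cmul in H1.
set s := u ^+ q + u in H1.
have [sz|sn] := eqVneq s 0.
  have uz : u = 0 by apply: nrq; apply/eqP; rewrite -addr_eq0 -/s sz.
  by left; rewrite aE bE uz !mul0r oppr0.
exfalso.
set h := #|F|./2.
have sqh (z : F) : z != 0 -> (z ^+ 2) ^+ h = 1 := @sq_pow_half F z oF.
have pm1 (z : F) : z != 0 -> z ^+ h = 1 \/ z ^+ h = -1.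
  move=> nz; have : (z ^+ h) ^+ 2 = 1.
    by rewrite -exprM mulnC exprM sqh.
  by move/eqP; rewrite sqrf_eq1 => /orP[/eqP|/eqP]; [left|right].
have oq : odd q by rewrite /q oddX op orbT.
have cq (z : F) : z ^+ q * z = (z ^+ (q.+1)./2) ^+ 2.
  rewrite -exprSr -exprM; congr (_ ^+ _).
  have := odd_double_half q.+1; rewrite /= oq /= add0n => E.
  by rewrite -{1}E -muln2.
have ah : alpha ^+ h = -1.
  case: (pm1 _ a0) => // E; exfalso; apply: nsq.
  exact: (@euler_sq F alpha oF a0 E).
have E1 : c ^+ q * c * s = alpha * sigma (d ^+ q * d * s).
  by apply/eqP; rewrite -subr_eq0 -oppr_eq0 -H1; apply/eqP; ring.
have key (z w : F) : z != 0 -> ((z ^+ q * z) * w) ^+ h = w ^+ h.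
  by move=> nz; rewrite exprMn cq sqh ?expf_neq0 // mul1r.
have := congr1 (fun z => z ^+ h) E1; rewrite /= key // exprMn -rmorphXn key // ah.

case: (pm1 _ sn) => ->; rewrite ?rmorph1 ?rmorphN1 ?mulN1r ?opprK.
  move/tt/eqP; by rewrite oner_eq0.
move=> E; have := tt _ (esym E); move/eqP; by rewrite oner_eq0.
Qed.
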